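(* For every irrational real $\alpha$ one has $\mathfrak k^*(\alpha)\ge\mathfrak k(\alpha)\ge2\lambda(\alpha)$, and if $\alpha$ is equivalent to $\sqrt2$ then $\mathfrak k^*(\alpha)=\mathfrak k(\alpha)=2\lambda(\alpha)$.
   Context: For irrational real $\alpha$ with continued fraction $\alpha=[a_0;a_1,a_2,\dots]$ and convergents $p_n/q_n$ ($n\ge0$), define for real $t\ge1$: $\psi_\alpha(t)=\min_{1\le q\le t,\,q\in\mathbb Z}\|q\alpha\|$ (where $\|x\|$ is the distance to the nearest integer), $\psi^{[2]}_\alpha(t)=\min\{|q\alpha-p|: p,q\in\mathbb Z,\ 1\le q\le t,\ (p,q)\ne(p_n,q_n)\ \forall n\ge0\}$, and $\psi^{[2]*}_\alpha(t)=\min\{|q\alpha-p|: p,q\in\mathbb Z,\ 1\le q\le t,\ p/q\ne p_n/q_n\ \forall n\ge0\}$. Set $\lambda(\alpha)=\liminf_{t\to\infty}t\psi_\alpha(t)$, $\mathfrak k(\alpha)=\liminf_{t\to\infty}t\psi^{[2]}_\alpha(t)$, $\mathfrak k^*(\alpha)=\liminf_{t\to\infty}t\psi^{[2]*}_\alpha(t)$. Two irrationals are equivalent if they are related by a Möbius map $x\mapsto(ax+b)/(cx+d)$ with integer entries and $ad-bc=\pm1$. *)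

(* Defs.v *)
From Stdlib Require Import Reals Lra ZArith Classical ClassicalEpsilon.
Open Scope R_scope.

Definition irrational (x : R) : Prop :=
  forall p q : Z, q <> 0%Z -> x <> IZR p / IZR q.

(** The minimum of a set of reals (junk value 0 if no minimum exists). *)
Definition is_min (S : R -> Prop) (m : R) : Prop :=
  S m /\ forall x, S x -> m <= x.
Definition Rmin_set (S : R -> Prop) : R :=
  epsilon (inhabits 0) (is_min S).

Definition dist_Z (x : R) : R :=
  Rmin_set (fun y => exists k : Z, y = Rabs (x - IZR k)).

(** Continued fraction expansion: complete quotients alpha_n,
    partial quotients a_n = floor(alpha_n) (Int_part is the floor). *)
Fixpoint cf_rem (x : R) (n : nat) : R :=
  match n with
  | O => x
  | S n' => / (cf_rem x n' - IZR (Int_part (cf_rem x n')))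
  end.
Definition cf_a (x : R) (n : nat) : Z := Int_part (cf_rem x n).

(** Convergents: cf_pq x n = ((p_n, q_n), (p_{n-1}, q_{n-1})),
    with p_{-1} = 1, q_{-1} = 0, p_0 = a_0, q_0 = 1. *)
Fixpoint cf_pq (x : R) (n : nat) : (Z * Z) * (Z * Z) :=
  match n with
  | O => ((cf_a x 0, 1%Z), (1%Z, 0%Z))
  | S n' =>
      let '((p, q), (p', q')) := cf_pq x n' in
      ((cf_a x n * p + p')%Z, (cf_a x n * q + q')%Z, (p, q))
  end.
Definition conv_p (x : R) (n : nat) : Z := fst (fst (cf_pq x n)).
Definition conv_q (x : R) (n : nat) : Z := snd (fst (cf_pq x n)).

Definition psi (a t : R) : R :=
  Rmin_set (fun y => exists q : Z, 1 <= IZR q <= t /\ y = dist_Z (IZR q * a)).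

Definition psi2 (a t : R) : R :=
  Rmin_set (fun y => exists p q : Z, 1 <= IZR q <= t /\
    (forall n : nat, (p, q) <> (conv_p a n, conv_q a n)) /\
    y = Rabs (IZR q * a - IZR p)).

Definition psi2s (a t : R) : R :=
  Rmin_set (fun y => exists p q : Z, 1 <= IZR q <= t /\
    (forall n : nat, IZR p / IZR q <> IZR (conv_p a n) / IZR (conv_q a n)) /\
    y = Rabs (IZR q * a - IZR p)).

Inductive ER : Type := NInf | Fin (r : R) | PInf.

Definition ER_le (x y : ER) : Prop :=
  match x, y with
  | NInf, _ => True
  | _, PInf => True
  | Fin a, Fin b => a <= b
  | _, _ => False
  end.

Definition ER_mul2 (x : ER) : ER :=
  match x with
  | Fin a => Fin (2 * a)
  | e => e
  end.

Definition is_liminf (f : R -> R) (l : ER) : Prop :=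
  match l with
  | Fin c => forall eps, eps > 0 ->
      (forall T, exists t, t >= T /\ f t < c + eps) /\
      (exists T, forall t, t >= T -> f t > c - eps)
  | PInf => forall M, exists T, forall t, t >= T -> f t > M
  | NInf => forall M T, exists t, t >= T /\ f t < M
  end.

Definition Liminf (f : R -> R) : ER := epsilon (inhabits NInf) (is_liminf f).

Definition lambda_ (a : R) : ER := Liminf (fun t => t * psi a t).
Definition kappa (a : R) : ER := Liminf (fun t => t * psi2 a t).
Definition kappa_star (a : R) : ER := Liminf (fun t => t * psi2s a t).

Definition equivalent (x y : R) : Prop :=
  exists a b c d : Z, ((a * d - b * c = 1) \/ (a * d - b * c = -1))%Z /\
    x = (IZR a * y + IZR b) / (IZR c * y + IZR d).

(* Main.v *)
Require Import Defs.
From Stdlib Require Import Reals Lra Lia Psatz ZArith List Classical ClassicalEpsilon Nsatz.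
Open Scope R_scope.

Lemma list_min (l : list R) (S : R -> Prop) :
  (exists y, In y l /\ S y) -> exists m, In m l /\ S m /\ forall y, In y l -> S y -> m <= y.
Proof.
  induction l as [|h l IH]; intros [y [Hy HS]].
  - destruct Hy.
  - destruct (classic (exists y, In y l /\ S y)) as [E|NE].
    + destruct (IH E) as [m [Hm1 [Hm2 Hm3]]].
      destruct (classic (S h)) as [Sh|NSh].
      * destruct (Rle_dec h m).
        -- exists h. split; [left; auto|split; auto]. intros z [<-|Hz] Sz; [lra|].
           specialize (Hm3 z Hz Sz); lra.
        -- exists m. split; [right; auto|split; auto]. intros z [<-|Hz] Sz; [lra|auto].
      * exists m. split; [right; auto|split; auto]. intros z [<-|Hz] Sz; [contradiction|auto].
    + destruct Hy as [<-|Hy]; [|exfalso; apply NE; eauto].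
      exists h. split; [left; auto|split; auto]. intros z [<-|Hz] Sz; [lra|].
      exfalso; apply NE; eauto.
Qed.

Definition zrange (lo : Z) (n : nat) : list Z := map (fun k => (lo + Z.of_nat k)%Z) (seq 0 n).

Lemma in_zrange lo n z : (lo <= z < lo + Z.of_nat n)%Z -> In z (zrange lo n).
Proof.
  intros H. unfold zrange. apply in_map_iff. exists (Z.to_nat (z - lo)).
  split; [lia|]. apply in_seq. lia.
Qed.

Lemma Rmin_set_spec (S : R -> Prop) : (exists m, is_min S m) -> is_min S (Rmin_set S).
Proof. intros H. unfold Rmin_set. apply epsilon_spec. exact H. Qed.

Lemma gen_min (b t : R) (S : R -> Prop) :
  (exists y, S y) ->
  (forall y, S y -> exists p q : Z, 1 <= IZR q <= t /\ y = Rabs (IZR q * b - IZR p)) ->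
  exists m, is_min S m.
Proof.
  intros [s0 Hs0] Hform.
  set (Qm := Z.to_nat (up t)).
  set (B := up (t * Rabs b + s0)).
  set (L := map (fun pq : Z * Z => Rabs (IZR (snd pq) * b - IZR (fst pq)))
                (list_prod (zrange (- B) (Z.to_nat (2 * B + 1))) (zrange 1 Qm))).
  assert (Hin : forall y, S y -> y <= s0 -> In y L).
  { intros y Sy Hle. destruct (Hform y Sy) as [p [q [[Hq1 Hq2] ->]]].
    unfold L. apply in_map_iff. exists (p, q). split; [reflexivity|].
    apply in_prod.
    - apply in_zrange.
      assert (Hp : Rabs (IZR p) <= t * Rabs b + s0).
      { replace (IZR p) with (IZR q * b - (IZR q * b - IZR p)) by ring.
        eapply Rle_trans; [apply Rabs_triang_inv2 || apply Rabs_triang|].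
        rewrite Rabs_Ropp. rewrite Rabs_mult.
        rewrite (Rabs_right (IZR q)) by lra.
        apply Rplus_le_compat; [apply Rmult_le_compat_r; [apply Rabs_pos|lra]|lra]. }
      destruct (archimed (t * Rabs b + s0)) as [H1 _]. fold B in H1.
      pose proof (Rle_abs (IZR p)) as Hp1; pose proof (Rle_abs (- IZR p)) as Hp2; rewrite Rabs_Ropp in Hp2.
      assert (IZR p < IZR B) by lra. assert (- IZR B < IZR p) by lra.
      apply lt_IZR in H. rewrite <- opp_IZR in H0. apply lt_IZR in H0.
      assert (0 <= B)%Z by lia.
      rewrite Z2Nat.id by lia. lia.
    - apply in_zrange. apply le_IZR in Hq1.
      destruct (archimed t) as [H1 _]. assert (IZR q < IZR (up t)) by lra.
      apply lt_IZR in H. unfold Qm. rewrite Z2Nat.id by lia. lia. }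
  destruct (list_min L S) as [m [Hm1 [Hm2 Hm3]]].
  { exists s0. split; auto. apply Hin; auto; lra. }
  exists m. split; auto. intros y Sy.
  destruct (Rle_dec y s0).
  - apply Hm3; auto.
  - assert (m <= s0) by (apply Hm3; auto; apply Hin; auto; lra). lra.
Qed.

Lemma dist_Z_spec (x : R) :
  (exists k : Z, dist_Z x = Rabs (x - IZR k)) /\ (forall k : Z, dist_Z x <= Rabs (x - IZR k)).
Proof.
  assert (H : is_min (fun y => exists k : Z, y = Rabs (x - IZR k)) (dist_Z x)).
  { apply Rmin_set_spec. apply (gen_min x 1).
    - exists (Rabs (x - IZR 0)). eauto.
    - intros y [k ->]. exists k, 1%Z. split; [lra|]. f_equal; ring. }
  destruct H as [[k Hk] H2]. split; eauto.
Qed.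
Definition ev_gt (f : R -> R) (c : R) : Prop := exists T, forall t, t >= T -> f t > c.

Lemma liminf_exists (f : R -> R) : exists l, is_liminf f l.
Proof.
  destruct (classic (exists c, ev_gt f c)) as [Hne|Hemp].
  - destruct (classic (forall M, ev_gt f M)) as [Hall|Hnall].
    + exists PInf. simpl. exact Hall.
    + apply not_all_ex_not in Hnall. destruct Hnall as [M0 HM0].
      assert (Hb : bound (ev_gt f)).
      { exists M0. intros c Hc. destruct (Rle_dec c M0) as [|n]; auto.
        exfalso. apply HM0. destruct Hc as [T HT]. exists T. intros t Ht.
        specialize (HT t Ht). lra. }
      destruct (completeness _ Hb Hne) as [L [HL1 HL2]].
      exists (Fin L). simpl. intros eps Heps. split.
      * intros T. apply NNPP. intros Hn.
        assert (ev_gt f (L + eps / 2)).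
        { exists T. intros t Ht. apply Rnot_le_lt. intros Hle.
          apply Hn. exists t. split; auto. lra. }
        specialize (HL1 _ H). lra.
      * apply NNPP. intros Hn.
        assert (Hub : is_upper_bound (ev_gt f) (L - eps)).
        { intros c [T HT]. destruct (Rle_dec c (L - eps)) as [|n]; auto.
          exfalso. apply Hn. exists T. intros t Ht. specialize (HT t Ht). lra. }
        specialize (HL2 _ Hub). lra.
  - exists NInf. simpl. intros M T. apply NNPP. intros Hn. apply Hemp.
    exists (M - 1). exists T. intros t Ht. apply Rnot_le_lt. intros Hle.
    apply Hn. exists t. split; auto. lra.
Qed.

Lemma Liminf_spec (f : R -> R) : is_liminf f (Liminf f).
Proof. unfold Liminf. apply epsilon_spec. apply liminf_exists. Qed.

Definition ER_scale (k : R) (x : ER) : ER :=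
  match x with Fin a => Fin (k * a) | e => e end.

Lemma liminf_cmp (k : R) (f g : R -> R) : 0 < k ->
  (forall c, ev_gt f c -> ev_gt g (k * c)) ->
  ER_le (ER_scale k (Liminf f)) (Liminf g).
Proof.
  intros Hk H. pose proof (Liminf_spec f) as Hf. pose proof (Liminf_spec g) as Hg.
  destruct (Liminf f) as [|L|] eqn:E1; destruct (Liminf g) as [|K|] eqn:E2; simpl in *; auto.
  -
    destruct (proj2 (Hf 1 ltac:(lra))) as [T HT].
    destruct (H (L - 1) (ex_intro _ T HT)) as [T2 HT2].
    destruct (Hg (k * (L - 1)) T2) as [t [Ht1 Ht2]]. specialize (HT2 t Ht1). lra.
  - apply Rnot_lt_le. intros Hlt.
    set (e := (k * L - K) / (2 * k + 1)).
    assert (He : 0 < e) by (unfold e; apply Rdiv_lt_0_compat; lra).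
    destruct (proj2 (Hf e He)) as [T HT].
    destruct (H (L - e) (ex_intro _ T HT)) as [T2 HT2].
    destruct (proj1 (Hg e He) T2) as [t [Ht1 Ht2]]. specialize (HT2 t Ht1).
    assert (k * (L - e) < K + e) by lra.
    assert (k * L - K < (k + 1) * e) by nra.
    unfold e in H1. assert ((k+1) * ((k * L - K) / (2 * k + 1)) < k * L - K).
    { unfold Rdiv. rewrite <- Rmult_assoc. apply (Rmult_lt_reg_r (2*k+1)); [lra|].
      rewrite Rmult_assoc, Rinv_l by lra. nra. }
    lra.
  - destruct (H (1 / k * 1) (Hf (1/k*1))) as [T HT].
    destruct (Hg 1 T) as [t [Ht1 Ht2]]. specialize (HT t Ht1).
    replace (k * (1 / k * 1)) with 1 in HT by (field; lra). lra.
  - destruct (H (1 / k * (K + 1)) (Hf _)) as [T HT].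
    destruct (proj1 (Hg 1 ltac:(lra)) T) as [t [Ht1 Ht2]]. specialize (HT t Ht1).
    replace (k * (1 / k * (K + 1))) with (K + 1) in HT by (field; lra). lra.
Qed.

Lemma liminf_upper (g : R -> R) (c : R) :
  (forall eps, eps > 0 -> forall T, exists t, t >= T /\ g t < c + eps) ->
  ER_le (Liminf g) (Fin c).
Proof.
  intros H. pose proof (Liminf_spec g) as Hg.
  destruct (Liminf g) as [|K|]; simpl in *; auto.
  - apply Rnot_lt_le. intros Hlt.
    destruct (proj2 (Hg ((K - c)/2) ltac:(lra))) as [T HT].
    destruct (H ((K - c)/2) ltac:(lra) T) as [t [Ht1 Ht2]]. specialize (HT t Ht1). lra.
  - destruct (Hg (c + 1)) as [T HT].
    destruct (H 1 ltac:(lra) T) as [t [Ht1 Ht2]]. specialize (HT t Ht1). lra.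
Qed.

Lemma liminf_lower (f : R -> R) (c : R) :
  (forall eps, eps > 0 -> ev_gt f (c - eps)) ->
  ER_le (Fin c) (Liminf f).
Proof.
  intros H. pose proof (Liminf_spec f) as Hf.
  destruct (Liminf f) as [|L|]; simpl in *; auto.
  - destruct (H 1 ltac:(lra)) as [T HT].
    destruct (Hf (c - 1) T) as [t [Ht1 Ht2]]. specialize (HT t Ht1). lra.
  - apply Rnot_lt_le. intros Hlt.
    destruct (H ((c - L)/2) ltac:(lra)) as [T HT].
    destruct (proj1 (Hf ((c - L)/2) ltac:(lra)) T) as [t [Ht1 Ht2]]. specialize (HT t Ht1). lra.
Qed.

Lemma ER_le_trans x y z : ER_le x y -> ER_le y z -> ER_le x z.
Proof. destruct x, y, z; simpl; intuition lra. Qed.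

Lemma ER_le_antisym x y : ER_le x y -> ER_le y x -> x = y.
Proof. destruct x, y; simpl; intuition; f_equal; lra. Qed.

Lemma ER_scale1 x : ER_scale 1 x = x.
Proof. destruct x; simpl; auto; f_equal; ring. Qed.
Lemma ER_scale2 x : ER_scale 2 x = ER_mul2 x.
Proof. destruct x; simpl; auto. Qed.
Lemma alg_main (A C x y : R) : 0 < A -> 0 <= C -> 0 < x -> 0 < y ->
  (A + C) * (x + y) >= 2 * (C * (2*x+y)) \/ (A + C) * (x + y) >= 2 * (A * x) \/
  (A + C) * (x + y) >= 2 * ((2*A+C) * y).
Proof.
  intros. destruct (Rge_or_gt ((A + C) * (x + y)) (2 * (C * (2*x+y)))); auto.
  destruct (Rge_or_gt ((A + C) * (x + y)) (2 * (A * x))); auto.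
  destruct (Rge_or_gt ((A + C) * (x + y)) (2 * ((2*A+C) * y))); auto.
  exfalso. nra.
Qed.

Lemma no_sqrt2 (X Y : Z) : (Y * Y = 2 * X * X)%Z -> X = 0%Z.
Proof.
  assert (G : forall n X Y, (Z.abs_nat X <= n)%nat -> (Y * Y = 2 * X * X)%Z -> X = 0%Z).
  { induction n; intros X0 Y0 Hn HE; [lia|].
    destruct (Z.eq_dec X0 0) as [|HX]; auto.
    pose proof (Z.div_mod Y0 2 ltac:(lia)) as HY. pose proof (Z.mod_pos_bound Y0 2 ltac:(lia)).
    set (y1 := (Y0 / 2)%Z) in *. set (r := (Y0 mod 2)%Z) in *.
    assert (r = 0 \/ r = 1)%Z as [Hr|Hr] by lia; rewrite Hr in HY; rewrite HY in HE.
    - pose proof (Z.div_mod X0 2 ltac:(lia)) as HX2. pose proof (Z.mod_pos_bound X0 2 ltac:(lia)).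
      set (x1 := (X0 / 2)%Z) in *. set (r2 := (X0 mod 2)%Z) in *.
      assert (r2 = 0 \/ r2 = 1)%Z as [Hr2|Hr2] by lia; rewrite Hr2 in HX2; rewrite HX2 in HE.
      + assert (x1 = 0)%Z. { apply (IHn x1 y1); [lia|lia]. } lia.
      + exfalso. lia.
    - exfalso. lia. }
  intros H. apply (G _ X Y (le_n _) H).
Qed.

Lemma pell_id (s c d X Y z : R) : s * s = 2 -> z * (c * s + d) = X * s + Y ->
  (2 * s * (d * X - c * Y) * z) * ((c*s+d)*(c*s+d)) = (z * z * (d*d - 2*c*c) - (Y*Y - 2*X*X)) * ((c*s+d)*(c*s+d)).
Proof. intros H1 H2. nsatz. Qed.

Section CF.
Variable al : R.
Hypothesis Hirr : irrational al.

Definition rr n := cf_rem al n.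
Definition fr n := cf_rem al n - IZR (cf_a al n).
Definition PP n := conv_p al n.
Definition QQ n := conv_q al n.
Definition Pm n := fst (snd (cf_pq al n)).
Definition Qm n := snd (snd (cf_pq al n)).
Definition dl n := IZR (QQ n) * al - IZR (PP n).
Definition dlm n := IZR (Qm n) * al - IZR (Pm n).
Definition xx n := Rabs (dl n).

Lemma pq_S n : PP (S n) = (cf_a al (S n) * PP n + Pm n)%Z /\
  QQ (S n) = (cf_a al (S n) * QQ n + Qm n)%Z /\ Pm (S n) = PP n /\ Qm (S n) = QQ n.
Proof.
  unfold PP, QQ, Pm, Qm, conv_p, conv_q. simpl.
  destruct (cf_pq al n) as [[p q] [p' q']]. simpl. auto.
Qed.

Lemma pq_0 : PP 0 = cf_a al 0 /\ QQ 0 = 1%Z /\ Pm 0 = 1%Z /\ Qm 0 = 0%Z.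
Proof. unfold PP, QQ, Pm, Qm, conv_p, conv_q. simpl. auto. Qed.

Lemma irr_inv (x : R) (k : Z) : irrational x -> irrational (/ (x - IZR k)).
Proof.
  intros H p q Hq E.
  destruct (Z.eq_dec p 0) as [->|Hp].
  - unfold Rdiv in E. rewrite Rmult_0_l in E.
    assert (x - IZR k <> 0). { intros E'. apply (H k 1%Z); [lia|]. unfold Rdiv. rewrite Rinv_1. lra. }
    apply Rinv_neq_0_compat in H0. contradiction.
  - apply (H (k * p + q)%Z p Hp).
    assert (x - IZR k <> 0). { intros E'. apply (H k 1%Z); [lia|]. unfold Rdiv. rewrite Rinv_1. lra. }
    assert (IZR p <> 0) by (apply not_0_IZR; auto).
    assert (IZR q <> 0) by (apply not_0_IZR; auto).
    assert (x - IZR k = IZR q / IZR p).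
    { rewrite <- (Rinv_inv (x - IZR k)). rewrite E. field. auto. }
    rewrite plus_IZR, mult_IZR. field_simplify_eq; auto.
    replace x with (IZR k + (x - IZR k)) by ring. rewrite H3. field. auto.
Qed.

Lemma irr_rr n : irrational (rr n).
Proof.
  induction n; simpl; auto. unfold rr in *. simpl. apply irr_inv. auto.
Qed.

Lemma fr_bounds n : 0 < fr n < 1.
Proof.
  unfold fr, cf_a. destruct (base_Int_part (cf_rem al n)) as [H1 H2].
  split; [|lra].
  destruct (Rle_lt_or_eq_dec _ _ H1) as [Hlt|Heq]; [lra|].
  exfalso. apply (irr_rr n (Int_part (cf_rem al n)) 1%Z); [lia|].
  unfold rr. unfold Rdiv. rewrite Rinv_1. lra.
Qed.

Lemma rr_S n : rr (S n) = / fr n.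
Proof. reflexivity. Qed.

Lemma a_pos n : (1 <= cf_a al (S n))%Z.
Proof.
  pose proof (fr_bounds n) as Hf.
  assert (1 < rr (S n)). { rewrite rr_S. rewrite <- Rinv_1. apply Rinv_lt_contravar; lra. }
  unfold cf_a. destruct (base_Int_part (cf_rem al (S n))) as [H1 H2].
  fold (rr (S n)) in *. assert (0 < IZR (Int_part (rr (S n)))) by lra.
  apply lt_IZR in H0. lia.
Qed.

Lemma fr_S n : fr (S n) = / fr n - IZR (cf_a al (S n)).
Proof. reflexivity. Qed.

Lemma dl_inv n : dl n = - fr n * dlm n.
Proof.
  induction n.
  - unfold dl, dlm. destruct pq_0 as [A [B [C D]]]. rewrite A, B, C, D.
    unfold fr. simpl. ring.
  - unfold dl, dlm. destruct (pq_S n) as [A [B [C D]]]. rewrite A, B, C, D.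
    fold (dl n). rewrite !plus_IZR, !mult_IZR.
    replace (IZR (cf_a al (S n)) * IZR (QQ n) + IZR (Qm n)) with
      (IZR (cf_a al (S n)) * IZR (QQ n) + IZR (Qm n)) by reflexivity.
    pose proof (fr_bounds n).
    assert (dlm n = - dl n / fr n) by (rewrite IHn; field; lra).
    assert (E : (IZR (cf_a al (S n)) * IZR (QQ n) + IZR (Qm n)) * al -
      (IZR (cf_a al (S n)) * IZR (PP n) + IZR (Pm n)) = IZR (cf_a al (S n)) * dl n + dlm n)
      by (unfold dl, dlm; ring).
    rewrite E, H0, fr_S. field. lra.
Qed.

Lemma dl_S n : dl (S n) = - fr (S n) * dl n.
Proof.
  rewrite dl_inv. unfold dlm. destruct (pq_S n) as [A [B [C D]]]. rewrite C, D. reflexivity.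
Qed.

Lemma dl_0 : dl 0 = fr 0.
Proof. rewrite dl_inv. unfold dlm. destruct pq_0 as [A [B [C D]]]. rewrite C, D. simpl. ring. Qed.

Lemma xx_S n : xx (S n) = fr (S n) * xx n.
Proof.
  unfold xx. rewrite dl_S, Rabs_mult, Rabs_Ropp. pose proof (fr_bounds (S n)).
  rewrite Rabs_right by lra. auto.
Qed.

Lemma xx_pos n : 0 < xx n.
Proof.
  induction n. - unfold xx. rewrite dl_0. pose proof (fr_bounds 0). rewrite Rabs_right; lra.
  - rewrite xx_S. pose proof (fr_bounds (S n)). nra.
Qed.

Lemma xx_dec n : xx (S n) < xx n.
Proof. rewrite xx_S. pose proof (fr_bounds (S n)). pose proof (xx_pos n). nra. Qed.

Lemma xx_lt1 n : xx n < 1.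
Proof.
  induction n. - unfold xx. rewrite dl_0. pose proof (fr_bounds 0). rewrite Rabs_right; lra.
  - pose proof (xx_dec n). lra.
Qed.

Definition DD n := (Qm n * PP n - Pm n * QQ n)%Z.

Lemma DD_unit n : DD n = 1%Z \/ DD n = (-1)%Z.
Proof.
  induction n.
  - unfold DD. destruct pq_0 as [A [B [C D]]]. rewrite A, B, C, D. right. lia.
  - unfold DD in *. destruct (pq_S n) as [A [B [C D]]]. rewrite A, B, C, D. lia.
Qed.

Lemma QQ_ge1 n : (1 <= QQ n)%Z /\ (0 <= Qm n)%Z.
Proof.
  induction n.
  - destruct pq_0 as [A [B [C D]]]. rewrite B, D. lia.
  - destruct (pq_S n) as [A [B [C D]]]. rewrite B, D. pose proof (a_pos n). nia.
Qed.

Lemma QQ_mono1 n : (QQ n <= QQ (S n))%Z.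
Proof.
  destruct (pq_S n) as [A [B [C D]]]. rewrite B. pose proof (a_pos n). pose proof (QQ_ge1 n). nia.
Qed.

Lemma QQ_SS n : (QQ (S n) + 1 <= QQ (S (S n)))%Z.
Proof.
  destruct (pq_S (S n)) as [A [B [C D]]]. rewrite B. destruct (pq_S n) as [_ [_ [_ D2]]]. rewrite D2. pose proof (a_pos (S n)).
  pose proof (QQ_ge1 n). pose proof (QQ_ge1 (S n)). nia.
Qed.

Lemma QQ_ge_n n : (Z.of_nat n <= QQ n)%Z.
Proof.
  induction n. - pose proof (QQ_ge1 0). lia.
  - destruct n. + pose proof (QQ_ge1 1). lia.
    + pose proof (QQ_SS n). lia.
Qed.

Lemma QQ_mono m n : (m <= n)%nat -> (QQ m <= QQ n)%Z.
Proof.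
  induction 1. lia. pose proof (QQ_mono1 m0). lia.
Qed.

Lemma key_id n : IZR (QQ (S n)) * xx n + IZR (QQ n) * xx (S n) = 1.
Proof.
  assert (E : IZR (QQ (S n)) * dl n - IZR (QQ n) * dl (S n) = IZR (DD (S n))).
  { unfold DD, dl. destruct (pq_S n) as [A [B [C D]]]. rewrite C, D.
    rewrite minus_IZR, !mult_IZR. ring. }
  rewrite dl_S in E.
  assert (E2 : dl n * (IZR (QQ (S n)) + IZR (QQ n) * fr (S n)) = IZR (DD (S n))) by lra.
  rewrite xx_S. 
  assert (Rabs (dl n * (IZR (QQ (S n)) + IZR (QQ n) * fr (S n))) = 1).
  { rewrite E2. destruct (DD_unit (S n)) as [-> | ->]; [apply Rabs_R1|].
    rewrite Rabs_left; lra. }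
  rewrite Rabs_mult in H. fold (xx n) in H.
  pose proof (QQ_ge1 n) as [H1 _]. pose proof (QQ_ge1 (S n)) as [H2 _].
  apply IZR_le in H1. apply IZR_le in H2. pose proof (fr_bounds (S n)).
  rewrite (Rabs_right (_ + _)) in H by nra. lra.
Qed.

Lemma bracket M (q : Z) : (QQ M <= q)%Z -> exists n, (M <= n)%nat /\ (QQ n <= q < QQ (S n))%Z.
Proof.
  intros H.
  assert (G : forall k, (exists n, (M <= n)%nat /\ (QQ n <= q < QQ (S n))%Z) \/ (QQ (M + k) <= q)%Z).
  { induction k. - right. rewrite Nat.add_0_r. auto.
    - destruct IHk as [|Hk]; auto.
      destruct (Z_lt_le_dec q (QQ (S (M + k)))).
      + left. exists (M + k)%nat. split; [lia|lia].
      + right. rewrite Nat.add_succ_r. auto. }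
  destruct (G (Z.to_nat q + 1)%nat) as [|Hk]; auto.
  pose proof (QQ_ge_n (M + (Z.to_nat q + 1))). lia.
Qed.


Lemma lattice n (p q : Z) : exists u v : Z,
  p = (u * PP n + v * PP (S n))%Z /\ q = (u * QQ n + v * QQ (S n))%Z.
Proof.
  set (M := (PP n * QQ (S n) - QQ n * PP (S n))%Z).
  assert (HM : (M * M = 1)%Z).
  { unfold M. destruct (DD_unit (S n)) as [H|H]; unfold DD in H;
    destruct (pq_S n) as [_ [_ [C D]]]; rewrite C, D in H; nia. }
  exists (M * (p * QQ (S n) - q * PP (S n)))%Z, (M * (q * PP n - p * QQ n))%Z.
  split.
  - transitivity (M * M * p)%Z; [rewrite HM; ring|]. unfold M. ring.
  - transitivity (M * M * q)%Z; [rewrite HM; ring|]. unfold M. ring.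
Qed.

Lemma val_eq n (p q u v : Z) :
  p = (u * PP n + v * PP (S n))%Z -> q = (u * QQ n + v * QQ (S n))%Z ->
  Rabs (IZR q * al - IZR p) = xx n * Rabs (IZR u - IZR v * fr (S n)).
Proof.
  intros -> ->. unfold xx. rewrite <- Rabs_mult. f_equal.
  rewrite !plus_IZR, !mult_IZR.
  transitivity (IZR u * dl n + IZR v * dl (S n)); [unfold dl; ring|].
  rewrite dl_S. ring.
Qed.

Lemma best n (p q : Z) : (1 <= q)%Z -> (q < QQ (S n))%Z -> xx n <= Rabs (IZR q * al - IZR p).
Proof.
  intros H1 H2. destruct (lattice n p q) as [u [v [Hp Hq]]].
  rewrite (val_eq n p q u v Hp Hq).
  pose proof (xx_pos n). pose proof (fr_bounds (S n)) as Hf.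
  pose proof (QQ_ge1 n) as [Qn _]. pose proof (QQ_ge1 (S n)) as [Qn1 _].
  assert (G : 1 <= Rabs (IZR u - IZR v * fr (S n))).
  { destruct (Z_lt_le_dec v 0) as [Hv|Hv].
    - assert (1 <= u)%Z by nia. apply IZR_le in H0. apply IZR_lt in Hv.
      rewrite Rabs_right; nra.
    - destruct (Z.eq_dec v 0) as [->|Hv0].
      + assert (u <> 0)%Z by nia.
        assert (1 <= u \/ u <= -1)%Z as [Hu|Hu] by lia; apply IZR_le in Hu;
          [rewrite Rabs_right|rewrite Rabs_left]; simpl in *; lra.
      + assert (u <= -1)%Z by nia. assert (1 <= v)%Z by lia.
        apply IZR_le in H0. apply IZR_le in H3.
        rewrite Rabs_left; nra. }
  nra.
Qed.

Definition mm k := IZR (QQ k) * xx k.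

Lemma main_lb k (p q : Z) : (QQ (S k) <= q < QQ (S (S k)))%Z ->
  (forall j, (p, q) <> (PP j, QQ j)) ->
  IZR q * Rabs (IZR q * al - IZR p) >= 2 * mm k \/
  IZR q * Rabs (IZR q * al - IZR p) >= 2 * mm (S k) \/
  IZR q * Rabs (IZR q * al - IZR p) >= 2 * mm (S (S k)).
Proof.
  intros [H1 H2] Hnc. set (n := S k). change (QQ n <= q)%Z in H1. change (q < QQ (S n))%Z in H2.
  destruct (lattice n p q) as [u [v [Hp Hq]]].
  rewrite (val_eq n p q u v Hp Hq).
  pose proof (xx_pos n). pose proof (fr_bounds (S n)) as Hf.
  pose proof (QQ_ge1 n) as [Qn _]. pose proof (QQ_ge1 (S n)) as [Qn1 _].
  pose proof (QQ_mono1 n) as Qmono.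
  assert (Hq1 : IZR (QQ n) <= IZR q) by (apply IZR_le; auto).
  assert (Two : 2 <= Rabs (IZR u - IZR v * fr (S n)) -> 
    IZR q * (xx n * Rabs (IZR u - IZR v * fr (S n))) >= 2 * mm n).
  { intros. unfold mm. apply Rle_ge. apply IZR_le in Qn.
    set (R0 := Rabs (IZR u - IZR v * fr (S n))) in *.
    assert (0 <= (IZR q - IZR (QQ n)) * (xx n * R0)) by (apply Rmult_le_pos; nra).
    assert (0 <= IZR (QQ n) * (xx n * (R0 - 2))) by (apply Rmult_le_pos; nra).
    nra. }
  destruct (Z_lt_le_dec v 0) as [Hv|Hv].
  -
    assert (v * QQ (S n) <= - QQ (S n))%Z by nia.
    assert (2 * QQ n <= u * QQ n)%Z by lia.
    assert (2 <= u)%Z by nia. apply IZR_le in H4. apply IZR_lt in Hv.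
    right; left. apply Two. rewrite Rabs_right; nra.
  - destruct (Z.eq_dec v 0) as [->|Hv0].
    + assert (1 <= u)%Z by nia.
      destruct (Z.eq_dec u 1) as [->|Hu1].
      * exfalso. apply (Hnc n). f_equal; lia.
      * assert (2 <= u)%Z by lia. apply IZR_le in H3.
        right; left. apply Two. rewrite Rabs_right; simpl; lra.
    + assert (u <= -1)%Z by nia. assert (1 <= v)%Z by lia.
      destruct (Z.eq_dec u (-1)) as [Hu|Hu].
      * assert (v = 1)%Z by nia. subst u v.
        destruct (pq_S n) as [A [B [C D]]].
        destruct (pq_S k) as [_ [_ [C2 D2]]]. fold n in C2, D2.
        pose proof (a_pos n) as Ha.
        destruct (Z.eq_dec (cf_a al (S n)) 1) as [Ha1|Ha1].
        { exfalso. apply (Hnc k). rewrite Hp, Hq, A, B, Ha1, C2, D2. f_equal; ring. }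
        destruct (Z.eq_dec (cf_a al (S n)) 2) as [Ha2|Ha2].
        --
           assert (Eq : q = (QQ n + QQ k)%Z) by (rewrite Hq, B, Ha2, D2; ring).
           assert (Ex : xx k = 2 * xx n + xx (S n)).
           { unfold n. rewrite !xx_S. fold n. rewrite fr_S. fold n. rewrite Ha2.
             pose proof (fr_bounds n). unfold n in *. field. lra. }
           assert (EQ1 : QQ (S n) = (2 * QQ n + QQ k)%Z) by (rewrite B, Ha2, D2; ring).
           assert (Hval : IZR (-1) - IZR 1 * fr (S n) = - (1 + fr (S n))) by (simpl; ring).
           rewrite Hval, Rabs_Ropp, Rabs_right by lra.
           assert (Ey : xx (S n) = fr (S n) * xx n) by apply xx_S.
           pose proof (QQ_ge1 k) as [Qk _].
           destruct (alg_main (IZR (QQ n)) (IZR (QQ k)) (xx n) (xx (S n))) as [G|[G|G]].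
           { apply IZR_lt. lia. } { apply IZR_le. lia. } { auto. } { apply xx_pos. }
           ++ left. unfold mm. rewrite Ex, Eq, plus_IZR. rewrite Ey in *. nra.
           ++ right; left. unfold mm. rewrite Eq, plus_IZR. rewrite Ey in *. nra.
           ++ right; right. unfold mm. rewrite Eq, plus_IZR, EQ1, plus_IZR, mult_IZR.
              rewrite Ey in *. simpl (IZR 2). nra.
        -- assert (3 <= cf_a al (S n))%Z by lia.
           assert (H2q : (2 * QQ n <= q)%Z).
           { rewrite Hq, B. pose proof (QQ_ge1 n) as [_ Hm]. nia. }
           right; left. unfold mm.
           assert (Hval : IZR (-1) - IZR 1 * fr (S n) = - (1 + fr (S n))) by (simpl; ring).
           rewrite Hval, Rabs_Ropp, Rabs_right by lra.
           apply IZR_le in H2q. rewrite mult_IZR in H2q.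
           apply IZR_le in Qn. clear -H Hf Qn H2q. assert (0 <= (IZR q - 2 * IZR (QQ n)) * xx n) by (apply Rmult_le_pos; lra). assert (0 <= IZR q * (xx n * fr (S n))) by (apply Rmult_le_pos; [lra|apply Rmult_le_pos; lra]). apply Rle_ge. apply Rminus_le. ring_simplify. lra.
      * assert (Hu2 : (u <= -2)%Z) by lia. apply IZR_le in Hu2. assert (Hv1 : (1 <= v)%Z) by lia. apply IZR_le in Hv1.
        right; left. apply Two. rewrite Rabs_left; nra.
Qed.


Lemma psi_min t : 1 <= t -> is_min (fun y => exists q : Z, 1 <= IZR q <= t /\ y = dist_Z (IZR q * al)) (psi al t).
Proof.
  intros Ht. apply Rmin_set_spec. apply (gen_min al t).
  - exists (dist_Z (IZR 1 * al)). exists 1%Z. split; auto; lra.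
  - intros y [q [Hq ->]]. destruct (dist_Z_spec (IZR q * al)) as [[k Hk] _].
    exists k, q. split; auto.
Qed.

Lemma psi_le_conv k : psi al (IZR (QQ k)) <= xx k.
Proof.
  pose proof (QQ_ge1 k) as [H _]. apply IZR_le in H.
  destruct (psi_min (IZR (QQ k)) H) as [_ Hm].
  eapply Rle_trans; [apply Hm; exists (QQ k); split; [split; lra|reflexivity]|].
  destruct (dist_Z_spec (IZR (QQ k) * al)) as [_ H2]. apply H2.
Qed.

Lemma conv_close n : Rabs (al - IZR (PP n) / IZR (QQ n)) < 1.
Proof.
  pose proof (QQ_ge1 n) as [H _]. apply IZR_le in H.
  replace (al - IZR (PP n) / IZR (QQ n)) with (dl n / IZR (QQ n)) by (unfold dl; field; lra).
  unfold Rdiv. rewrite Rabs_mult. rewrite Rabs_inv. rewrite (Rabs_right (IZR (QQ n))) by lra.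
  fold (xx n). pose proof (xx_lt1 n). pose proof (xx_pos n).
  assert (/ IZR (QQ n) <= 1). { rewrite <- Rinv_1. apply Rinv_le_contravar; lra. }
  assert (0 < / IZR (QQ n)) by (apply Rinv_0_lt_compat; lra). nra.
Qed.

Lemma far_int : 1 < Rabs (al - IZR (cf_a al 0 + 2)).
Proof.
  unfold cf_a. simpl. destruct (base_Int_part al) as [H1 H2].
  rewrite plus_IZR. rewrite Rabs_left; simpl; lra.
Qed.

Lemma psi2s_min t : 1 <= t -> is_min (fun y => exists p q : Z, 1 <= IZR q <= t /\
    (forall n : nat, IZR p / IZR q <> IZR (conv_p al n) / IZR (conv_q al n)) /\
    y = Rabs (IZR q * al - IZR p)) (psi2s al t).
Proof.
  intros Ht. apply Rmin_set_spec. apply (gen_min al t).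
  - exists (Rabs (IZR 1 * al - IZR (cf_a al 0 + 2))). exists (cf_a al 0 + 2)%Z, 1%Z.
    split; [lra|]. split; auto. intros n E.
    pose proof (conv_close n). fold (PP n) (QQ n) in E. rewrite <- E in H.
    pose proof far_int. replace (IZR (cf_a al 0 + 2) / IZR 1) with (IZR (cf_a al 0 + 2)) in H
      by (simpl; field). lra.
  - intros y [p [q [Hq [_ ->]]]]. exists p, q. auto.
Qed.

Lemma psi2_min t : 1 <= t -> is_min (fun y => exists p q : Z, 1 <= IZR q <= t /\
    (forall n : nat, (p, q) <> (conv_p al n, conv_q al n)) /\
    y = Rabs (IZR q * al - IZR p)) (psi2 al t).
Proof.
  intros Ht. apply Rmin_set_spec. apply (gen_min al t).
  - exists (Rabs (IZR 1 * al - IZR (cf_a al 0 + 2))). exists (cf_a al 0 + 2)%Z, 1%Z.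
    split; [lra|]. split; auto. intros n E. injection E as E1 E2.
    pose proof (conv_close n). fold (PP n) (QQ n) in E1, E2. rewrite <- E1, <- E2 in H.
    pose proof far_int. replace (IZR (cf_a al 0 + 2) / IZR 1) with (IZR (cf_a al 0 + 2)) in H
      by (simpl; field). lra.
  - intros y [p [q [Hq [_ ->]]]]. exists p, q. auto.
Qed.

Lemma partA : ER_le (kappa al) (kappa_star al).
Proof.
  unfold kappa, kappa_star. rewrite <- (ER_scale1 (Liminf _)).
  apply liminf_cmp; [lra|]. intros c [T HT]. exists (Rmax T 1). intros t Ht.
  assert (t >= T) by (pose proof (Rmax_l T 1); lra).
  assert (Ht1 : 1 <= t) by (pose proof (Rmax_r T 1); lra).
  specialize (HT t H). rewrite Rmult_1_l.
  destruct (psi2s_min t Ht1) as [[p [q [Hq [Hn E]]]] _].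
  destruct (psi2_min t Ht1) as [_ Hm].
  assert (psi2 al t <= psi2s al t).
  { apply Hm. exists p, q. split; auto. split; auto. intros n Ep. apply (Hn n).
    injection Ep as -> ->. reflexivity. }
  apply Rmult_le_compat_l with (r := t) in H0; lra.
Qed.

Lemma mm_gt c T k : (forall t, t >= T -> t * psi al t > c) -> T <= IZR (QQ k) -> mm k > c.
Proof.
  intros HT Hk. specialize (HT (IZR (QQ k)) ltac:(lra)).
  pose proof (psi_le_conv k). pose proof (QQ_ge1 k) as [H1 _]. apply IZR_le in H1.
  unfold mm. apply Rmult_le_compat_l with (r := IZR (QQ k)) in H; lra.
Qed.

Lemma partB : ER_le (ER_mul2 (lambda_ al)) (kappa al).
Proof.
  unfold kappa, lambda_. rewrite <- ER_scale2.
  apply liminf_cmp; [lra|]. intros c [T HT].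
  destruct (Rlt_le_dec c 0) as [Hc|Hc].
  - exists 1. intros t Ht. destruct (psi2_min t ltac:(lra)) as [[p [q [_ [_ E]]]] _].
    rewrite E. pose proof (Rabs_pos (IZR q * al - IZR p)). nra.
  - set (M := Z.to_nat (up T)).
    assert (HM : T <= IZR (QQ M)).
    { assert (Hu : (up T <= QQ M)%Z) by (pose proof (QQ_ge_n M); unfold M in *; lia).
      apply IZR_le in Hu. destruct (archimed T). lra. }
    pose proof (xx_pos M) as HxM.
    exists (Rmax 1 (Rmax T (2 * c / xx M + 1))). intros t Ht.
    pose proof (Rmax_l 1 (Rmax T (2 * c / xx M + 1))).
    pose proof (Rmax_r 1 (Rmax T (2 * c / xx M + 1))).
    pose proof (Rmax_l T (2 * c / xx M + 1)). pose proof (Rmax_r T (2 * c / xx M + 1)).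
    destruct (psi2_min t ltac:(lra)) as [[p [q [[Hq1 Hq2] [Hnc E]]]] _].
    rewrite E. apply le_IZR in Hq1.
    destruct (Z_lt_le_dec q (QQ (S M))) as [Hl|Hl].
    + pose proof (best M p q Hq1 Hl).
      assert (2 * c / xx M < t) by lra.
      assert (2 * c < t * xx M).
      { apply (Rmult_lt_compat_r (xx M)) in H4; auto. unfold Rdiv in H4.
        rewrite Rmult_assoc, Rinv_l in H4 by lra. lra. }
      assert (t * xx M <= t * Rabs (IZR q * al - IZR p)) by (apply Rmult_le_compat_l; lra).
      lra.
    + destruct (bracket (S M) q Hl) as [n [Hn1 Hn2]].
      destruct n as [|k]; [lia|].
      assert (Hnc' : forall j, (p, q) <> (PP j, QQ j)) by exact Hnc.
      pose proof (mm_gt c T k HT ltac:(pose proof (QQ_mono M k ltac:(lia)); apply IZR_le in H3; lra)).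
      pose proof (mm_gt c T (S k) HT ltac:(pose proof (QQ_mono M (S k) ltac:(lia)); apply IZR_le in H4; lra)).
      pose proof (mm_gt c T (S (S k)) HT ltac:(pose proof (QQ_mono M (S (S k)) ltac:(lia)); apply IZR_le in H5; lra)).
      assert (Hqt : IZR q <= t) by lra.
      assert (IZR q * Rabs (IZR q * al - IZR p) <= t * Rabs (IZR q * al - IZR p))
        by (apply Rmult_le_compat_r; [apply Rabs_pos|lra]).
      destruct (main_lb k p q Hn2 Hnc') as [G|[G|G]]; lra.
Qed.

Lemma s_facts : sqrt 2 * sqrt 2 = 2 /\ 1.41 < sqrt 2 < 1.42.
Proof.
  assert (H : sqrt 2 * sqrt 2 = 2) by (apply sqrt_sqrt; lra).
  assert (0 <= sqrt 2) by apply sqrt_pos. split; auto. split; nra.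
Qed.

Section Equiv.
Variables a b c d : Z.
Hypothesis Hdet : ((a * d - b * c = 1) \/ (a * d - b * c = -1))%Z.
Hypothesis Hal : al = (IZR a * sqrt 2 + IZR b) / (IZR c * sqrt 2 + IZR d).

Local Notation s := (sqrt 2).
Definition DZ := (a * d - b * c)%Z.
Definition Kp := Rabs (IZR d * IZR d - 2 * IZR c * IZR c).
Definition cs := IZR c * s + IZR d.
Definition XZ (p q : Z) := (q * a - p * c)%Z.
Definition YZ (p q : Z) := (q * b - p * d)%Z.
Definition NZ (p q : Z) := (YZ p q * YZ p q - 2 * XZ p q * XZ p q)%Z.
Definition zz (p q : Z) := IZR q * al - IZR p.

Lemma cs_nz : cs <> 0.
Proof.
  intros E. apply (Hirr 0%Z 1%Z); [lia|]. rewrite Hal. fold cs. rewrite E.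
  unfold Rdiv. rewrite Rinv_0. simpl. ring.
Qed.

Lemma DZ_sq : (DZ * DZ = 1)%Z.
Proof. unfold DZ. destruct Hdet as [-> | ->]; reflexivity. Qed.

Lemma z_form p q : zz p q * cs = IZR (XZ p q) * s + IZR (YZ p q).
Proof.
  unfold zz, XZ, YZ. rewrite Hal. fold cs. pose proof cs_nz.
  rewrite !minus_IZR, !mult_IZR. unfold cs in *. field. auto.
Qed.

Lemma identity p q : 2 * s * IZR DZ * IZR q * zz p q =
  zz p q * zz p q * (IZR d * IZR d - 2 * IZR c * IZR c) - IZR (NZ p q).
Proof.
  pose proof cs_nz as Hcs. pose proof (proj1 s_facts) as Hs.
  assert (HD : (DZ * q = d * XZ p q - c * YZ p q)%Z) by (unfold DZ, XZ, YZ; ring).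
  apply (f_equal IZR) in HD. rewrite mult_IZR, minus_IZR, !mult_IZR in HD.
  assert (HN : IZR (NZ p q) = IZR (YZ p q) * IZR (YZ p q) - 2 * IZR (XZ p q) * IZR (XZ p q)).
  { unfold NZ. rewrite minus_IZR, !mult_IZR. reflexivity. }
  rewrite HN.
  apply (Rmult_eq_reg_r (cs * cs)); [|apply Rmult_integral_contrapositive; auto].
  replace (2 * s * IZR DZ * IZR q * zz p q) with (2 * s * (IZR DZ * IZR q) * zz p q) by ring.
  rewrite HD. unfold cs. apply pell_id; auto. fold cs. apply z_form.
Qed.

Lemma identity_abs p q : (1 <= q)%Z ->
  2 * s * IZR q * Rabs (zz p q) = Rabs (zz p q * zz p q * (IZR d * IZR d - 2 * IZR c * IZR c) - IZR (NZ p q)).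
Proof.
  intros Hq. rewrite <- identity. apply IZR_le in Hq.
  pose proof (proj2 s_facts).
  rewrite !Rabs_mult. rewrite (Rabs_right 2) by lra. rewrite (Rabs_right s) by lra.
  rewrite (Rabs_right (IZR q)) by lra.
  assert (Rabs (IZR DZ) = 1).
  { unfold DZ. destruct Hdet as [-> | ->]. apply Rabs_R1. rewrite Rabs_left; simpl; lra. }
  rewrite H0. ring.
Qed.

Lemma NZ_nz p q : (1 <= q)%Z -> NZ p q <> 0%Z.
Proof.
  intros Hq HN. unfold NZ in HN.
  assert (HX : XZ p q = 0%Z) by (apply (no_sqrt2 _ (YZ p q)); lia).
  rewrite HX in HN. assert (HY : YZ p q = 0%Z) by nia.
  assert (HD : (DZ * q = d * XZ p q - c * YZ p q)%Z) by (unfold DZ, XZ, YZ; ring).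
  rewrite HX, HY in HD. pose proof DZ_sq. nia.
Qed.

Lemma pell_lb p q : (1 <= q)%Z -> 1 - Kp * (zz p q * zz p q) <= 2 * s * IZR q * Rabs (zz p q).
Proof.
  intros Hq. rewrite identity_abs by auto.
  pose proof (NZ_nz p q Hq) as HN.
  assert (1 <= Rabs (IZR (NZ p q))).
  { destruct (Z_lt_le_dec (NZ p q) 0).
    - assert (NZ p q <= -1)%Z by lia. apply IZR_le in H. rewrite Rabs_left; simpl in *; lra.
    - assert (1 <= NZ p q)%Z by lia. apply IZR_le in H. rewrite Rabs_right; lra. }
  assert (Rabs (zz p q * zz p q * (IZR d * IZR d - 2 * IZR c * IZR c)) = Kp * (zz p q * zz p q)).
  { unfold Kp. rewrite Rabs_mult. rewrite (Rabs_right (zz p q * zz p q)) by nra. ring. }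
  pose proof (Rabs_triang_inv (IZR (NZ p q)) (zz p q * zz p q * (IZR d * IZR d - 2 * IZR c * IZR c))).
  rewrite <- Rabs_Ropp. replace (- (zz p q * zz p q * (IZR d * IZR d - 2 * IZR c * IZR c) - IZR (NZ p q)))
    with (IZR (NZ p q) - zz p q * zz p q * (IZR d * IZR d - 2 * IZR c * IZR c)) by ring.
  lra.
Qed.

Lemma Kp_pos : 0 <= Kp.
Proof. apply Rabs_pos. Qed.

Lemma partC1 : ER_le (Fin (1 / (2 * s))) (lambda_ al).
Proof.
  unfold lambda_. apply liminf_lower. intros eps Heps.
  pose proof Kp_pos as HK. pose proof (proj2 s_facts) as Hs.
  set (eta := Rmin 1 (eps / (2 * (Kp + 1)))).
  assert (He1 : eta <= 1) by apply Rmin_l.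
  assert (He2 : eta <= eps / (2 * (Kp + 1))) by apply Rmin_r.
  assert (He0 : 0 < eta).
  { unfold eta. apply Rmin_glb_lt; [lra|]. apply Rdiv_lt_0_compat; lra. }
  assert (HKe : Kp * (eta * eta) <= eps / 2).
  { assert ((Kp + 1) * eta <= eps / 2).
    { apply (Rmult_le_compat_l (Kp + 1)) in He2; [|lra].
      replace ((Kp + 1) * (eps / (2 * (Kp + 1)))) with (eps / 2) in He2 by (field; lra). lra. }
    nra. }
  exists (Rmax 1 (1 / eta)). intros t Ht.
  pose proof (Rmax_l 1 (1 / eta)). pose proof (Rmax_r 1 (1 / eta)).
  destruct (psi_min t ltac:(lra)) as [[q [[Hq1 Hq2] E]] _]. rewrite E.
  destruct (dist_Z_spec (IZR q * al)) as [[k Hk] _]. rewrite Hk.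
  fold (zz k q). apply le_IZR in Hq1.
  apply (Rmult_gt_reg_l (2 * s)); [lra|].
  replace (2 * s * (1 / (2 * s) - eps)) with (1 - 2 * s * eps) by (field; lra).
  pose proof (Rabs_pos (zz k q)).
  destruct (Rlt_le_dec (Rabs (zz k q)) eta) as [Hz|Hz].
  - pose proof (pell_lb k q Hq1).
    assert (zz k q * zz k q <= eta * eta).
    { assert (Hzz : zz k q * zz k q = Rabs (zz k q) * Rabs (zz k q))
        by (rewrite <- Rabs_mult; symmetry; apply Rabs_right; nra).
      rewrite Hzz. apply Rmult_le_compat; lra. }
    assert (Kp * (zz k q * zz k q) <= eps / 2) by nra.
    apply IZR_le in Hq1.
    assert (IZR q * Rabs (zz k q) <= t * Rabs (zz k q)) by (apply Rmult_le_compat_r; lra).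
    nra.
  - assert (1 / eta * eta = 1) by (field; lra).
    assert (t * eta <= t * Rabs (zz k q)) by (apply Rmult_le_compat_l; lra).
    assert (1 <= t * eta) by nra. nra.
Qed.


Lemma pell_seq k : exists X Y : Z, (Y * Y - 2 * X * X = -2)%Z /\
  IZR X * s + IZR Y = s * (3 - 2 * s) ^ k.
Proof.
  pose proof (proj1 s_facts) as Hs.
  induction k.
  - exists 1%Z, 0%Z. split; [lia|]. simpl. ring.
  - destruct IHk as [X [Y [HN HE]]]. exists (3 * X - 2 * Y)%Z, (3 * Y - 4 * X)%Z.
    split; [nia|]. rewrite !minus_IZR, !mult_IZR. simpl pow.
    rewrite <- Rmult_assoc, (Rmult_comm s (3 - 2 * s)), Rmult_assoc, <- HE.
    replace (IZR 3) with 3 by reflexivity. replace (IZR 2) with 2 by reflexivity.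
    replace (IZR 4) with 4 by reflexivity.
    replace 4 with (2 * (s * s)) by (rewrite Hs; ring). ring.
Qed.

Lemma pell_small eta : 0 < eta -> exists X Y : Z, (Y * Y - 2 * X * X = -2)%Z /\
  Rabs (IZR X * s + IZR Y) < eta /\ (0 <= DZ * (d * X - c * Y))%Z.
Proof.
  intros He. pose proof (proj2 s_facts) as Hs.
  destruct (pow_lt_1_zero (3 - 2 * s) ltac:(rewrite Rabs_right; lra) (eta / s)
    ltac:(apply Rdiv_lt_0_compat; lra)) as [N HN].
  destruct (pell_seq N) as [X [Y [H1 H2]]].
  assert (Hb : Rabs (IZR X * s + IZR Y) < eta).
  { rewrite H2. rewrite Rabs_mult. rewrite (Rabs_right s) by lra.
    specialize (HN N (le_n _)).
    apply (Rmult_lt_compat_l s) in HN; [|lra].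
    replace (s * (eta / s)) with eta in HN by (field; lra). lra. }
  destruct (Z_lt_le_dec (DZ * (d * X - c * Y)) 0) as [Hl|Hl].
  - exists (- X)%Z, (- Y)%Z. split; [nia|]. split; [|nia].
    rewrite !opp_IZR. replace (- IZR X * s + - IZR Y) with (- (IZR X * s + IZR Y)) by ring.
    rewrite Rabs_Ropp. auto.
  - exists X, Y. auto.
Qed.

Lemma partC2 : ER_le (kappa_star al) (Fin (1 / s)).
Proof.
  unfold kappa_star. apply liminf_upper. intros eps Heps T.
  pose proof Kp_pos as HK. pose proof (proj2 s_facts) as Hs. pose proof cs_nz as Hcs.
  set (T1 := Rmax T 1). assert (HT1 : T <= T1) by apply Rmax_l. assert (HT1' : 1 <= T1) by apply Rmax_r.
  set (eta := Rmin (Rmin 1 (eps / (2 * (Kp + 1)))) (Rmin (1 / (20 * (Kp + 1))) (1 / (4 * T1)))).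
  assert (He1 : eta <= 1) by (unfold eta; eapply Rle_trans; [apply Rmin_l|apply Rmin_l]).
  assert (He2 : eta <= eps / (2 * (Kp + 1))) by (unfold eta; eapply Rle_trans; [apply Rmin_l|apply Rmin_r]).
  assert (He3 : eta <= 1 / (20 * (Kp + 1))) by (unfold eta; eapply Rle_trans; [apply Rmin_r|apply Rmin_l]).
  assert (He4 : eta <= 1 / (4 * T1)) by (unfold eta; eapply Rle_trans; [apply Rmin_r|apply Rmin_r]).
  assert (He0 : 0 < eta).
  { unfold eta. apply Rmin_glb_lt; apply Rmin_glb_lt; try lra; apply Rdiv_lt_0_compat; lra. }
  assert (HKe : Kp * (eta * eta) <= eps / 2).
  { assert ((Kp + 1) * eta <= eps / 2).
    { apply (Rmult_le_compat_l (Kp + 1)) in He2; [|lra].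
      replace ((Kp + 1) * (eps / (2 * (Kp + 1)))) with (eps / 2) in He2 by (field; lra). lra. }
    nra. }
  assert (HKe2 : Kp * (eta * eta) <= 1 / 20).
  { assert ((Kp + 1) * eta <= 1 / 20).
    { apply (Rmult_le_compat_l (Kp + 1)) in He3; [|lra].
      replace ((Kp + 1) * (1 / (20 * (Kp + 1)))) with (1 / 20) in He3 by (field; lra). lra. }
    nra. }
  assert (HeT : 4 * T1 * eta <= 1).
  { apply (Rmult_le_compat_l (4 * T1)) in He4; [|lra].
    replace (4 * T1 * (1 / (4 * T1))) with 1 in He4 by (field; lra). lra. }
  assert (Hcsp : 0 < Rabs cs) by (apply Rabs_pos_lt; auto).
  destruct (pell_small (eta * Rabs cs) ltac:(nra)) as [X [Y [HN [Hw Hq0]]]].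
  set (q := (DZ * (d * X - c * Y))%Z). set (p := (DZ * (b * X - a * Y))%Z).
  pose proof DZ_sq as HDD.
  assert (HX : XZ p q = X).
  { unfold XZ, p, q. transitivity (DZ * DZ * X)%Z; [unfold DZ; ring|]. rewrite HDD. ring. }
  assert (HY : YZ p q = Y).
  { unfold YZ, p, q. transitivity (DZ * DZ * Y)%Z; [unfold DZ; ring|]. rewrite HDD. ring. }
  assert (HNpq : NZ p q = (-2)%Z) by (unfold NZ; rewrite HX, HY; lia).
  assert (Hz : Rabs (zz p q) < eta).
  { pose proof (z_form p q) as Ez. rewrite HX, HY in Ez.
    assert (Rabs (zz p q) * Rabs cs < eta * Rabs cs) by (rewrite <- Rabs_mult, Ez; lra).
    nra. }
  assert (Hzz : zz p q * zz p q = Rabs (zz p q) * Rabs (zz p q))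
    by (rewrite <- Rabs_mult; symmetry; apply Rabs_right; nra).
  pose proof (Rabs_pos (zz p q)) as Hz0.
  assert (HKz : Kp * (zz p q * zz p q) <= Kp * (eta * eta)).
  { apply Rmult_le_compat_l; auto. rewrite Hzz. apply Rmult_le_compat; lra. }
  assert (HKabs : Rabs (zz p q * zz p q * (IZR d * IZR d - 2 * IZR c * IZR c)) = Kp * (zz p q * zz p q)).
  { unfold Kp. rewrite Rabs_mult. rewrite (Rabs_right (zz p q * zz p q)) by nra. ring. }
  assert (Hq1 : (1 <= q)%Z).
  { destruct (Z.eq_dec q 0) as [E|E]; [|lia].
    exfalso. pose proof (identity p q) as Id. rewrite HNpq in Id.
    replace (IZR q) with 0 in Id by (rewrite E; reflexivity).
    assert (zz p q * zz p q * (IZR d * IZR d - 2 * IZR c * IZR c) = -2) by lra.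
    rewrite H in HKabs. rewrite Rabs_left in HKabs by lra. lra. }
  pose proof (identity_abs p q Hq1) as Ia. rewrite HNpq in Ia.
  assert (Hup : 2 * s * IZR q * Rabs (zz p q) <= 2 + Kp * (zz p q * zz p q)).
  { rewrite Ia. eapply Rle_trans; [apply Rabs_triang|]. rewrite HKabs, Rabs_Ropp.
    rewrite Rabs_left by (simpl; lra). simpl; lra. }
  assert (Hlo : 2 - Kp * (zz p q * zz p q) <= 2 * s * IZR q * Rabs (zz p q)).
  { rewrite Ia. pose proof (Rabs_triang_inv (IZR (-2)) (zz p q * zz p q * (IZR d * IZR d - 2 * IZR c * IZR c))).
    rewrite <- Rabs_Ropp. replace (- (zz p q * zz p q * (IZR d * IZR d - 2 * IZR c * IZR c) - IZR (-2)))
      with (IZR (-2) - zz p q * zz p q * (IZR d * IZR d - 2 * IZR c * IZR c)) by ring.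
    rewrite HKabs in H. rewrite (Rabs_left (IZR (-2))) in H by (simpl; lra). simpl in *; lra. }
  assert (HqR : 1 <= IZR q) by (apply IZR_le; auto).
  assert (Hnc : forall n : nat, IZR p / IZR q <> IZR (conv_p al n) / IZR (conv_q al n)).
  { intros n Hr. fold (PP n) (QQ n) in Hr.
    pose proof (QQ_ge1 n) as [HQn _]. pose proof (QQ_ge1 (S n)) as [HQn1 _].
    assert (HQnR : 1 <= IZR (QQ n)) by (apply IZR_le; auto).
    assert (Hcross : (p * QQ n = PP n * q)%Z).
    { apply eq_IZR. rewrite !mult_IZR.
      apply (Rmult_eq_reg_r (/ (IZR q * IZR (QQ n)))).
      - replace (IZR p * IZR (QQ n) * / (IZR q * IZR (QQ n))) with (IZR p / IZR q) by (field; lra).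
        rewrite Hr. field. lra.
      - apply Rinv_neq_0_compat. nra. }
    set (Xn := XZ (PP n) (QQ n)). set (Yn := YZ (PP n) (QQ n)). set (Nn := NZ (PP n) (QQ n)).
    assert (HXQ : (X * QQ n = q * Xn)%Z).
    { rewrite <- HX; unfold Xn, XZ. transitivity (q * (QQ n * a) - c * (p * QQ n))%Z; [ring|].
      rewrite Hcross. ring. }
    assert (HYQ : (Y * QQ n = q * Yn)%Z).
    { rewrite <- HY; unfold Yn, YZ. transitivity (q * (QQ n * b) - d * (p * QQ n))%Z; [ring|].
      rewrite Hcross. ring. }
    assert (HNN : (-2 * (QQ n * QQ n) = Nn * (q * q))%Z).
    { unfold Nn, NZ. fold Xn Yn.
      transitivity ((Y * QQ n) * (Y * QQ n) - 2 * (X * QQ n) * (X * QQ n))%Z.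
      - transitivity ((Y * Y - 2 * X * X) * (QQ n * QQ n))%Z; [rewrite HN; ring|ring].
      - rewrite HXQ, HYQ. ring. }
    pose proof (NZ_nz (PP n) (QQ n) HQn) as HNn. fold Nn in HNn.
    pose proof (key_id n) as Key.
    pose proof (xx_pos n). pose proof (xx_pos (S n)). pose proof (xx_dec n).
    pose proof (QQ_mono1 n) as Hmono. apply IZR_le in Hmono.
    assert (HxR : IZR q * xx n = IZR (QQ n) * Rabs (zz p q)).
    { unfold xx, dl, zz. apply (f_equal IZR) in Hcross. rewrite !mult_IZR in Hcross.
      assert (EE : IZR q * (IZR (QQ n) * al - IZR (PP n)) = IZR (QQ n) * (IZR q * al - IZR p)).
      { transitivity (IZR (QQ n) * (IZR q * al) - IZR (PP n) * IZR q); [ring|].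
        rewrite <- Hcross. ring. }
      apply (f_equal Rabs) in EE. rewrite !Rabs_mult in EE.
      rewrite (Rabs_right (IZR q)) in EE by lra. rewrite (Rabs_right (IZR (QQ n))) in EE by lra.
      exact EE. }
    destruct (Z_lt_le_dec Nn 0) as [Hneg|Hpos]; [|nia].
    destruct (Z.eq_dec Nn (-1)) as [E1|E1].
    { rewrite E1 in HNN. pose proof (no_sqrt2 (QQ n) q ltac:(lia)). lia. }
    destruct (Z.eq_dec Nn (-2)) as [E2|E2].
    - rewrite E2 in HNN. assert (HQq : QQ n = q) by nia. rewrite HQq in HxR.
      assert (Hxn : xx n = Rabs (zz p q)).
      { apply (Rmult_eq_reg_l (IZR q)); lra. }
      pose proof (pell_lb (PP (S n)) (QQ (S n)) HQn1) as Lb.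
      fold (zz (PP (S n)) (QQ (S n))) in *.
      assert (Ex1 : Rabs (zz (PP (S n)) (QQ (S n))) = xx (S n)) by reflexivity.
      rewrite Ex1 in Lb.
      assert (Hzz2 : zz (PP (S n)) (QQ (S n)) * zz (PP (S n)) (QQ (S n)) = xx (S n) * xx (S n))
        by (rewrite <- Ex1, <- Rabs_mult; symmetry; apply Rabs_right; nra).
      rewrite Hzz2 in Lb.
      assert (Kp * (xx (S n) * xx (S n)) <= Kp * (zz p q * zz p q)).
      { apply Rmult_le_compat_l; auto. rewrite Hzz, <- Hxn. apply Rmult_le_compat; lra. }
      assert (Hsum : 1 >= IZR (QQ n) * xx n + IZR (QQ (S n)) * xx (S n)).
      { rewrite <- Key. assert (0 <= (IZR (QQ (S n)) - IZR (QQ n)) * (xx n - xx (S n))) by (apply Rmult_le_pos; lra). nra. }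
      rewrite HQq, Hxn in Hsum. nra.
    - assert (Nn <= -3)%Z by lia.
      assert (H3q : 3 * (IZR q * IZR q) <= 2 * (IZR (QQ n) * IZR (QQ n))).
      { assert (H3z : (3 * (q * q) <= 2 * (QQ n * QQ n))%Z) by nia. apply IZR_le in H3z. rewrite !mult_IZR in H3z. lra. }
      assert (Hm1 : IZR (QQ n) * xx n <= 1).
      { rewrite <- Key. pose proof (xx_pos (S n)). nra. }
      assert (Hmq : IZR (QQ n) * xx n * IZR q = IZR (QQ n) * IZR (QQ n) * Rabs (zz p q)).
      { transitivity (IZR (QQ n) * (IZR q * xx n)); [ring|]. rewrite HxR. ring. }
      assert (IZR (QQ n) * xx n * IZR q >= 3 / 2 * (IZR q * IZR q) * Rabs (zz p q)) by nra.
      assert (IZR (QQ n) * xx n >= 3 / 2 * (IZR q * Rabs (zz p q))).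
      { apply Rle_ge. apply (Rmult_le_reg_r (IZR q)); [lra|]. nra. }
      nra. }
  exists (IZR q). split.
  - assert (IZR q * Rabs (zz p q) > 0.6) by nra.
    assert (4 * T1 * Rabs (zz p q) <= 1) by nra. nra.
  - destruct (psi2s_min (IZR q) HqR) as [_ Hm].
    assert (psi2s al (IZR q) <= Rabs (zz p q)).
    { apply Hm. exists p, q. split; [lra|]. split; auto. }
    assert (IZR q * psi2s al (IZR q) <= IZR q * Rabs (zz p q)) by (apply Rmult_le_compat_l; lra).
    apply (Rmult_lt_reg_l (2 * s)); [lra|].
    replace (2 * s * (1 / s + eps)) with (2 + 2 * s * eps) by (field; lra). nra.
Qed.

End Equiv.
End CF.

Lemma ER_fin_mul2 x y : ER_le (Fin x) y -> ER_le (Fin (2 * x)) (ER_mul2 y).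
Proof. destruct y; simpl; auto; lra. Qed.

Theorem mainTheorem15 (alpha : R) (Hirr : irrational alpha) :
  ER_le (kappa alpha) (kappa_star alpha) /\
  ER_le (ER_mul2 (lambda_ alpha)) (kappa alpha) /\
  (equivalent alpha (sqrt 2) ->
     kappa_star alpha = kappa alpha /\ kappa alpha = ER_mul2 (lambda_ alpha)).
Proof.
  pose proof (partA alpha Hirr) as HA. pose proof (partB alpha Hirr) as HB.
  split; auto. split; auto.
  intros [a [b [c [d [Hdet Hal]]]]].
  pose proof (partC1 alpha Hirr a b c d Hdet Hal) as C1.
  pose proof (partC2 alpha Hirr a b c d Hdet Hal) as C2.
  apply ER_fin_mul2 in C1.
  replace (2 * (1 / (2 * sqrt 2))) with (1 / sqrt 2) in C1
    by (pose proof (proj2 s_facts); field; lra).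
  assert (H1 : ER_le (kappa_star alpha) (ER_mul2 (lambda_ alpha))) by (eapply ER_le_trans; eauto).
  split.
  - apply ER_le_antisym; auto. eapply ER_le_trans; eauto.
  - apply ER_le_antisym; auto. eapply ER_le_trans; eauto.
Qed.
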